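(* Let $\{(A_k,f_k)\}_{k=0}^n$ be a chain of one-dimensional double extensions by $\{(b_{k+1},d_k)\}_{k=0}^{n-1}$ satisfying (NNP) and (2SP). Then $n\geq 3$ and: (a) $(A_n,f_n)$ is a $2n$-dimensional $2$-step nilpotent quadratic Lie algebra with $A_{n,2}\subseteq Z(A_n)$, $[b_i,b_j]_n=\sum_{k=1}^n D_{ijk}\,b_k^*$, $[b_i^*,\cdot\,]_n=0$, and $f_n(b_i,b_j^* )=\delta_{ij}$, $f_n(b_i,b_j)=f_n(b_i^*,b_j^* )=0$; (b) $(A_n,f_n)$ is reduced if and only if $A_{n,2}=\mathrm{span}\langle \sum_{k=1}^n \hat w_k(b_i,b_j): 1\leq j<i\leq n\rangle$, where $\hat w_k(b_i,b_j):=D_{ijk}\,b_k^*$.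
   Context: Work over a field $\mathbb{K}$ of characteristic zero. A quadratic Lie algebra $(A,f)$ is a Lie algebra with a non-degenerate symmetric bilinear form $f$ with $f([x,y],z)+f(y,[x,z])=0$. For an $f$-skew-symmetric derivation $d$ of $A$ (i.e. $f(d(x),y)+f(x,d(y))=0$), the one-dimensional double extension of $(A,f)$ by $(b,d)$ is $\mathbb{K}b\oplus A\oplus\mathbb{K}b^*$ with bracket $[\lambda b+a+\mu b^*,\lambda' b+a'+\mu' b^*]=\lambda d(a')-\lambda' d(a)+[a,a']_A+f(d(a),a')b^*$ and form $(\lambda b+a+\mu b^*,\lambda' b+a'+\mu' b^* )\mapsto\lambda\mu'+\lambda'\mu+f(a,a')$. A chain of one-dimensional double extensions $\{(A_k,f_k)\}_{k=0}^n$ by $\{(b_{k+1},d_k)\}_{k=0}^{n-1}$ is defined by $A_0=\{0\}$, $f_0=0$, and for $0\le k\le n-1$, $d_k$ an $f_k$-skew-symmetric derivation of $A_k$ and $(A_{k+1},f_{k+1})$ the one-dimensional double extension of $(A_k,f_k)$ by $(b_{k+1},d_k)$, $A_{k+1}=\mathbb{K}b_{k+1}\oplus A_k\oplus\mathbb{K}b_{k+1}^*$. Thus $A_k$ has basis $b_k,\dots,b_1,b_1^*,\dots,b_k^*$; set $A_{k,1}=\mathrm{span}\langle b_1,\dots,b_k\rangle$, $A_{k,2}=\mathrm{span}\langle b_1^*,\dots,b_k^*\rangle$. The chain satisfies (NNP) if $d_k\neq0$ for some $k$, and (2SP) if $\mathrm{im}\,d_k\subseteq A_{k,2}\subseteq\ker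 d_k$ for every $k\ge1$. For indices $i,j,k\in\{1,\dots,n\}$, $D_{ijk}:=\mathrm{sgn}(\sigma)f_{\sigma(k)-1}(d_{\sigma(k)-1}(b_{\sigma(i)}),b_{\sigma(j)})$ where $\sigma$ is the permutation of $\{i,j,k\}$ with $\sigma(i)<\sigma(j)<\sigma(k)$, and $D_{ijk}=0$ if two indices coincide. A quadratic Lie algebra $L$ is reduced if $Z(L)\subseteq [L,L]$; $2$-step nilpotent means $[L,[L,L]]=0\ne[L,L]$. *)

(* Defs.v *)
From mathcomp Require Import all_boot all_order all_algebra.
Set Implicit Arguments. Unset Strict Implicit. Unset Printing Implicit Defensive.
Import GRing.Theory.
Local Open Scope ring_scope.

Section LieNotions.
Variables (K : fieldType) (V : lmodType K).

Definition in_derived (br : V -> V -> V) (w : V) : Prop :=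
  exists s : seq (V * V), w = \sum_(p <- s) br p.1 p.2.

Definition in_center (br : V -> V -> V) (x : V) : Prop :=
  forall y : V, br x y = 0.

Definition is_Lie_algebra (br : V -> V -> V) : Prop :=
  [/\ (forall (c : K) x y z, br (c *: x + y) z = c *: br x z + br y z),
      (forall (c : K) x y z, br x (c *: y + z) = c *: br x y + br x z),
      (forall x, br x x = 0) &
      (forall x y z, br x (br y z) + br y (br z x) + br z (br x y) = 0)].

Definition is_quadratic_Lie (br : V -> V -> V) (f : V -> V -> K) : Prop :=
  [/\ is_Lie_algebra br,
      (forall (c : K) x y z, f (c *: x + y) z = c * f x z + f y z),
      (forall x y, f x y = f y x),
      (forall x, (forall y, f x y = 0) -> x = 0) &
      (forall x y z, f (br x y) z + f y (br x z) = 0)].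

Definition two_step_nilpotent (br : V -> V -> V) : Prop :=
  (forall x w, in_derived br w -> br x w = 0) /\
  (exists w, in_derived br w /\ w != 0).

Definition reduced (br : V -> V -> V) : Prop :=
  forall x, in_center br x -> in_derived br x.

End LieNotions.

(* Chains of one-dimensional double extensions, modelled inside the ambient  *)
(* 2n-dimensional space V = 'M[K]_(2,n): for x : V, x 0 i is the coordinate  *)
(* of b_{i+1} and x 1 i the coordinate of b_{i+1}^* (i : 'I_n, 0-based).     *)
(* A_k is the subspace where all coordinates of index >= k vanish.          *)
Section Chain.
Variables (K : fieldType) (n : nat).

Notation V := 'M[K]_(2, n).

Definition inA (k : nat) (x : V) : Prop :=
  forall (r : 'I_2) (i : 'I_n), (k <= i)%N -> x r i = 0.

Definition inA2 (k : nat) (x : V) : Prop :=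
  inA k x /\ forall i : 'I_n, x 0 i = 0.

Definition projA (k : nat) (x : V) : V :=
  \matrix_(r < 2, i < n) (if (i < k)%N then x r i else 0).

(* coordinates of b_{k+1} and b_{k+1}^* (0 if k >= n) *)
Definition coordb (k : nat) (x : V) : K :=
  oapp (fun i : 'I_n => x 0 i) 0 (insub k).
Definition coords (k : nat) (x : V) : K :=
  oapp (fun i : 'I_n => x 1 i) 0 (insub k).

Definition bvec (k : nat) : V :=
  \matrix_(r < 2, i < n) (if (r == 0) && (i == k :> nat) then 1 else 0).
Definition bsvec (k : nat) : V :=
  \matrix_(r < 2, i < n) (if (r == 1) && (i == k :> nat) then 1 else 0).

(* f_k : f_0 = 0, f_{k+1}(l b + a + m bs, l' b + a' + m' bs)
                  = l m' + l' m + f_k(a, a') *)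
Fixpoint formA (k : nat) : V -> V -> K :=
  match k with
  | 0 => fun _ _ => 0
  | k'.+1 => fun x y =>
      coordb k' x * coords k' y + coordb k' y * coords k' x
      + formA k' (projA k' x) (projA k' y)
  end.

(* [ , ]_k : [ , ]_0 = 0, and [ , ]_{k+1} is the double extension bracket
   of (A_k, f_k) by (b_{k+1}, d_k) *)
Fixpoint brA (d : nat -> V -> V) (k : nat) : V -> V -> V :=
  match k with
  | 0 => fun _ _ => 0
  | k'.+1 => fun x y =>
      let a := projA k' x in let a' := projA k' y in
      coordb k' x *: d k' a' - coordb k' y *: d k' a + brA d k' a a'
      + formA k' (d k' a) a' *: bsvec k'
  end.

Definition skew_derivation (d : nat -> V -> V) (k : nat) : Prop :=
  [/\ (forall x, inA k x -> inA k (d k x)),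
      (forall (c : K) x y, inA k x -> inA k y -> d k (c *: x + y) = c *: d k x + d k y),
      (forall x y, inA k x -> inA k y ->
         d k (brA d k x y) = brA d k (d k x) y + brA d k x (d k y)) &
      (forall x y, inA k x -> inA k y -> formA k (d k x) y + formA k x (d k y) = 0)].

Definition is_chain (d : nat -> V -> V) : Prop :=
  forall k, (k < n)%N -> skew_derivation d k.

Definition NNP (d : nat -> V -> V) : Prop :=
  exists k, [/\ (k < n)%N & exists x, inA k x /\ d k x != 0].

Definition twoSP (d : nat -> V -> V) : Prop :=
  forall k, (1 <= k)%N -> (k < n)%N ->
    (forall x, inA k x -> inA2 k (d k x)) /\
    (forall x, inA2 k x -> d k x = 0).

Definition sort_sign (i j k : nat) : K :=
  (-1) ^+ ((i > j)%N + (i > k)%N + (j > k)%N).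

(* D_{ijk} (0-based: i stands for b_{i+1}); p < q < r is the sorted triple,
   and f_{sigma(k)-1}(d_{sigma(k)-1} b_{sigma(i)}, b_{sigma(j)}) becomes
   formA r (d r (bvec p)) (bvec q). *)
Definition Dcoef (d : nat -> V -> V) (i j k : nat) : K :=
  if (i == j) || (i == k) || (j == k) then 0 else
  let p := minn i (minn j k) in
  let r := maxn i (maxn j k) in
  let q := (i + j + k - p - r)%N in
  sort_sign i j k * formA r (d r (bvec p)) (bvec q).

Definition what (d : nat -> V -> V) (i j : nat) : V :=
  \sum_(k < n) Dcoef d i j k *: bsvec k.

Definition in_span_what (d : nat -> V -> V) (x : V) : Prop :=
  exists c : 'I_n -> 'I_n -> K,
    x = \sum_(i < n) \sum_(j < n | (j < i)%N) c i j *: what d i j.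

End Chain.

Arguments bvec {K n} k.
Arguments bsvec {K n} k.

(* Main.v *)
Require Import Defs.
From mathcomp Require Import all_boot all_order all_algebra.
From mathcomp Require Import zify ring.
Set Implicit Arguments. Unset Strict Implicit. Unset Printing Implicit Defensive.
Import GRing.Theory.
Local Open Scope ring_scope.

Section Basic.
Variables (K : fieldType) (n : nat).
Local Notation V := 'M[K]_(2, n).

Lemma coordb_ord (i : 'I_n) (x : V) : coordb i x = x 0 i.
Proof. by rewrite /coordb valK. Qed.
Lemma coords_ord (i : 'I_n) (x : V) : coords i x = x 1 i.
Proof. by rewrite /coords valK. Qed.
Lemma coordb_out k (x : V) : (n <= k)%N -> coordb k x = 0.
Proof. by move=> h; rewrite /coordb insubN // -leqNgt. Qed.
Lemma coords_out k (x : V) : (n <= k)%N -> coords k x = 0.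
Proof. by move=> h; rewrite /coords insubN // -leqNgt. Qed.

Lemma coordbD k (x y : V) : coordb k (x + y) = coordb k x + coordb k y.
Proof. rewrite /coordb; case: insubP => [i _ _|_] /=; by rewrite ?mxE ?addr0. Qed.
Lemma coordsD k (x y : V) : coords k (x + y) = coords k x + coords k y.
Proof. rewrite /coords; case: insubP => [i _ _|_] /=; by rewrite ?mxE ?addr0. Qed.
Lemma coordbZ k c (x : V) : coordb k (c *: x) = c * coordb k x.
Proof. rewrite /coordb; case: insubP => [i _ _|_] /=; by rewrite ?mxE ?mulr0. Qed.
Lemma coordsZ k c (x : V) : coords k (c *: x) = c * coords k x.
Proof. rewrite /coords; case: insubP => [i _ _|_] /=; by rewrite ?mxE ?mulr0. Qed.
Lemma coordb0 k : coordb k (0 : V) = 0.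
Proof. rewrite /coordb; case: insubP => [i _ _|_] /=; by rewrite ?mxE. Qed.
Lemma coords0 k : coords k (0 : V) = 0.
Proof. rewrite /coords; case: insubP => [i _ _|_] /=; by rewrite ?mxE. Qed.
Lemma coordbN k (x : V) : coordb k (- x) = - coordb k x.
Proof. rewrite /coordb; case: insubP => [i _ _|_] /=; by rewrite ?mxE ?oppr0. Qed.
Lemma coordsN k (x : V) : coords k (- x) = - coords k x.
Proof. rewrite /coords; case: insubP => [i _ _|_] /=; by rewrite ?mxE ?oppr0. Qed.

Lemma coordb_sum I (r : seq I) (P : pred I) (F : I -> V) k :
  coordb k (\sum_(i <- r | P i) F i) = \sum_(i <- r | P i) coordb k (F i).
Proof. exact: (big_morph _ (coordbD k) (coordb0 k)). Qed.
Lemma coords_sum I (r : seq I) (P : pred I) (F : I -> V) k :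
  coords k (\sum_(i <- r | P i) F i) = \sum_(i <- r | P i) coords k (F i).
Proof. exact: (big_morph _ (coordsD k) (coords0 k)). Qed.

Lemma coordb_bvec i l : coordb i (bvec l : V) = ((i == l) && (i < n)%N)%:R.
Proof.
rewrite /coordb; case: insubP => [j _ <-|] /=; first by rewrite mxE /= ltn_ord andbT; case: eqP.
by move/negbTE => ->; rewrite andbF.
Qed.
Lemma coords_bvec i l : coords i (bvec l : V) = 0.
Proof. rewrite /coords; case: insubP => [j _ _|] //=; by rewrite mxE. Qed.
Lemma coordb_bsvec i l : coordb i (bsvec l : V) = 0.
Proof. rewrite /coordb; case: insubP => [j _ _|] //=; by rewrite mxE. Qed.
Lemma coords_bsvec i l : coords i (bsvec l : V) = ((i == l) && (i < n)%N)%:R.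
Proof.
rewrite /coords; case: insubP => [j _ <-|] /=; first by rewrite mxE /= ltn_ord andbT; case: eqP.
by move/negbTE => ->; rewrite andbF.
Qed.

Lemma coordb_projA k i (x : V) : coordb i (projA k x) = if (i < k)%N then coordb i x else 0.
Proof. rewrite /coordb; case: insubP => [j _ <-|] /=; first by rewrite mxE. by case: ifP. Qed.
Lemma coords_projA k i (x : V) : coords i (projA k x) = if (i < k)%N then coords i x else 0.
Proof. rewrite /coords; case: insubP => [j _ <-|] /=; first by rewrite mxE. by case: ifP. Qed.

Lemma coord_eq (x y : V) :
  (forall i, (i < n)%N -> coordb i x = coordb i y) ->
  (forall i, (i < n)%N -> coords i x = coords i y) -> x = y.
Proof.
move=> hb hs; apply/matrixP => r j.
have := hb j (ltn_ord j); have := hs j (ltn_ord j).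
rewrite !coordb_ord !coords_ord.
case: r => [[|[|]]] //= hr; move=> e1 e2.
- by have -> : Ordinal hr = 0 by apply: val_inj.
- by have -> : Ordinal hr = 1 by apply: val_inj.
Qed.

Lemma inA_coord k (x : V) : inA k x <->
  (forall i, (k <= i)%N -> coordb i x = 0 /\ coords i x = 0).
Proof.
split=> h.
  move=> i ki; rewrite /coordb /coords; case: insubP => [j _ ej|] /=; last by [].
  by split; apply: h; rewrite ej.
move=> r j kj; have [hb hs] := h j kj; move: hb hs; rewrite coordb_ord coords_ord.
case: r => [[|[|]]] //= hr e1 e2.
- by have -> : Ordinal hr = 0 by apply: val_inj.
- by have -> : Ordinal hr = 1 by apply: val_inj.
Qed.

Lemma inA2_coord k (x : V) : inA2 k x <->
  ((forall i, (k <= i)%N -> coords i x = 0) /\ forall i, coordb i x = 0).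
Proof.
split.
  case=> /inA_coord h1 h2; split; first by move=> i /h1 [].
  move=> i; rewrite /coordb; case: insubP => [j _ _|] //=.
move=> [h1 h2]; split; last by move=> i; rewrite -coordb_ord.
by apply/inA_coord => i ki; split; [exact: h2| exact: h1].
Qed.

Lemma sum_delta (F : nat -> K) k i :
  \sum_(0 <= l < k) F l * (i == l)%:R = if (i < k)%N then F i else 0.
Proof.
elim: k => [|k IH]; first by rewrite big_geq.
rewrite big_nat_recr //= IH.
case: (ltngtP i k) => h.
- by rewrite mulr0 addr0 ltnS ltnW.
- by rewrite mulr0 addr0 ltnS leqNgt h.
- by rewrite mulr1 add0r h ltnSn.
Qed.

Lemma sum_delta' (F : nat -> K) k i :
  \sum_(0 <= l < k) (l == i)%:R * F l = if (i < k)%N then F i else 0.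
Proof. rewrite -sum_delta; apply: eq_bigr => l _; by rewrite mulrC eq_sym. Qed.

Lemma formA_closed k (x y : V) :
  formA k x y = \sum_(0 <= i < k) (coordb i x * coords i y + coordb i y * coords i x).
Proof.
elim: k x y => [|k IH] x y /=; first by rewrite big_geq.
rewrite IH big_nat_recr //= addrC; congr (_ + _).
apply: eq_big_nat => i /andP [_ ik]; by rewrite !coordb_projA !coords_projA ik.
Qed.

Lemma coords_sum_bsvec (s : nat -> K) k m : (m < n)%N ->
  coords m (\sum_(0 <= l < k) s l *: (bsvec l : V)) = if (m < k)%N then s m else 0.
Proof.
move=> mn; rewrite coords_sum -sum_delta; apply: eq_bigr => l _.
by rewrite coordsZ coords_bsvec mn andbT.
Qed.
Lemma coordb_sum_bsvec (s : nat -> K) k m :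
  coordb m (\sum_(0 <= l < k) s l *: (bsvec l : V)) = 0.
Proof. rewrite coordb_sum big1 // => l _; by rewrite coordbZ coordb_bsvec mulr0. Qed.

End Basic.
Section Chain2.
Variables (K : fieldType) (n : nat) (d : nat -> 'M[K]_(2, n) -> 'M[K]_(2, n)).
Local Notation V := 'M[K]_(2, n).
Hypothesis hchar : [pchar K] =i pred0.
Hypothesis hchain : is_chain d.
Hypothesis h2sp : twoSP d.

Lemma two_ne0 : (2%:R : K) != 0.
Proof. by have := (pcharf0P K).1 hchar 2 => ->. Qed.

Lemma eq_opp0 (a : K) : a = - a -> a = 0.
Proof.
move=> h; have : a *+ 2 = 0 by rewrite mulr2n {1}h addNr.
by rewrite -mulr_natl => /eqP; rewrite mulf_eq0 (negbTE two_ne0) /= => /eqP.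
Qed.

Lemma formA_sym k (x y : V) : formA k x y = formA k y x.
Proof. rewrite !formA_closed; apply: eq_bigr => i _; by rewrite addrC. Qed.

Lemma formA_bvec_r k (x : V) l : (l < n)%N ->
  formA k x (bvec l) = if (l < k)%N then coords l x else 0.
Proof.
move=> ln; rewrite formA_closed; have := sum_delta' (fun i => coords i x) k l => /= <-.
apply: eq_bigr => i _.
rewrite coords_bvec coordb_bvec mulr0 add0r; congr (_ * _).
by case: eqP => // ->; rewrite ln.
Qed.

Lemma formA_bsvec_r k (x : V) l : (l < n)%N ->
  formA k x (bsvec l) = if (l < k)%N then coordb l x else 0.
Proof.
move=> ln; rewrite formA_closed; have := sum_delta' (fun i => coordb i x) k l => /= <-.
apply: eq_bigr => i _.
rewrite coords_bsvec coordb_bsvec mul0r addr0 mulrC; congr (_ * _).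
by case: eqP => // ->; rewrite ln.
Qed.

Lemma inA_bvec k i : (i < k)%N -> inA k (bvec i : V).
Proof.
move=> ik; apply/inA_coord => m km; rewrite coords_bvec coordb_bvec.
by rewrite (_ : (m == i) = false) //; apply/eqP => e; move: ik; rewrite -e ltnNge km.
Qed.

Lemma inA_projA k (x : V) : inA k (projA k x).
Proof.
apply/inA_coord => m km; by rewrite coordb_projA coords_projA ltnNge km.
Qed.

Definition cc k i j := formA k (d k (bvec i)) (bvec j : V).

Lemma cc_anti k i j : (k < n)%N -> (i < k)%N -> (j < k)%N -> cc k i j = - cc k j i.
Proof.
move=> kn ik jk; have [_ _ _ sk] := hchain kn.
have := sk _ _ (inA_bvec ik) (inA_bvec jk).
rewrite /cc; move/eqP; rewrite addr_eq0 [formA k (bvec i) _]formA_sym => /eqP //.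
Qed.

Lemma cc_diag k i : (k < n)%N -> (i < k)%N -> cc k i i = 0.
Proof. by move=> kn ik; apply: eq_opp0; apply: cc_anti. Qed.

Lemma d_inA2 k (a : V) : (k < n)%N -> inA k a -> inA2 k (d k a).
Proof.
move=> kn ha; case: k kn ha => [|k] kn ha.
  have [h1 _ _ _] := hchain kn; have := h1 _ ha.
  move/inA_coord => h; apply/inA2_coord; split; first by move=> i /h [].
  by move=> i; have [] := h i isT.
by have [h _] := h2sp (ltn0Sn k) kn; apply: h.
Qed.

Lemma A2_decomp k (z : V) : (k <= n)%N -> inA2 k z ->
  z = \sum_(0 <= l < k) coords l z *: bsvec l.
Proof.
move=> kn /inA2_coord [h1 h2]; apply: coord_eq => i ilt.
  by rewrite coordb_sum_bsvec h2.
rewrite coords_sum_bsvec //; case: ifP => // /negbT; rewrite -leqNgt; exact: h1.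
Qed.

Lemma dA k (a : V) : (k < n)%N -> inA k a ->
  d k a = \sum_(0 <= l < k) (\sum_(0 <= m < k) coordb m a * cc k m l) *: bsvec l.
Proof.
move=> kn ha; have kn' := ltnW kn.
rewrite {1}(A2_decomp kn' (d_inA2 kn ha)); apply: eq_big_nat => l /andP [_ lk].
have ln := leq_trans lk kn'.
have [_ _ _ sk] := hchain kn.
congr (_ *: _).
have e := sk _ _ ha (inA_bvec lk).
have -> : coords l (d k a) = formA k (d k a) (bvec l) by rewrite formA_bvec_r // lk.
move/eqP: e; rewrite addr_eq0 => /eqP ->.
rewrite formA_closed -sumrN; apply: eq_big_nat => m /andP [_ mk].
have /inA2_coord [_ hz] := d_inA2 kn (inA_bvec lk).
rewrite hz mul0r addr0.
have mn := leq_trans mk kn'.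
have -> : coords m (d k (bvec l)) = cc k l m by rewrite /cc formA_bvec_r // mk.
by rewrite cc_anti // mulrN opprK.
Qed.

End Chain2.
Section Dc.
Variables (K : fieldType) (n : nat) (d : nat -> 'M[K]_(2, n) -> 'M[K]_(2, n)).

Lemma sign_swap12 i j l : i != j -> sort_sign K j i l = - sort_sign K i j l.
Proof.
rewrite /sort_sign => hij; case: ltngtP hij => h //= _; rewrite !exprD; ring.
Qed.

Lemma sign_swap23 i j l : j != l -> sort_sign K i l j = - sort_sign K i j l.
Proof.
rewrite /sort_sign => hij; case: (ltngtP j l) hij => h //= _; rewrite !exprD; ring.
Qed.

Lemma D_swap12 i j l : Dcoef d j i l = - Dcoef d i j l.
Proof.
rewrite /Dcoef (eq_sym j i) -!orbA (orbC (j == l)).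
case: ifP => hc; first by rewrite oppr0.
rewrite minnCA maxnCA (addnC j i) sign_swap12 ?mulNr //.
by apply/negP => e; rewrite e in hc.
Qed.

Lemma D_swap23 i j l : Dcoef d i l j = - Dcoef d i j l.
Proof.
rewrite /Dcoef (eq_sym l j) -!orbA (orbCA (i == l)).
case: ifP => hc; first by rewrite oppr0.
rewrite (minnC l j) (maxnC l j) -(addnAC i j l) sign_swap23 ?mulNr //.
by apply/negP => e; rewrite e !orbT in hc.
Qed.

Lemma D_direct k j m : (j < m)%N -> (m < k)%N -> Dcoef d k j m = cc d k j m.
Proof.
move=> jm mk; rewrite /Dcoef.
have -> : (k == j) = false by apply/eqP; lia.
have -> : (k == m) = false by apply/eqP; lia.
have -> : (j == m) = false by apply/eqP; lia.
have -> : minn k (minn j m) = j by lia.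
have -> : maxn k (maxn j m) = k by lia.
have -> : (k + j + m - j - k = m)%N by lia.
rewrite /sort_sign.
have -> : (j < k)%N by lia.
have -> : (m < k)%N by lia.
have -> : (m < j)%N = false by lia.
by rewrite /= expr2 mulN1r opprK mul1r.
Qed.

Lemma D_self12 i l : Dcoef d i i l = 0.
Proof. by rewrite /Dcoef eqxx. Qed.
Lemma D_self13 i j : Dcoef d i j i = 0.
Proof. by rewrite /Dcoef eqxx orbT. Qed.
Lemma D_self23 i j : Dcoef d i j j = 0.
Proof. by rewrite /Dcoef eqxx !orbT. Qed.

Hypothesis hchar : [pchar K] =i pred0.
Hypothesis hchain : is_chain d.

Lemma E1 k j m : (k < n)%N -> (j < k)%N -> (m < k)%N -> Dcoef d k j m = cc d k j m.
Proof.
move=> kn jk mk; case: (ltngtP j m) => h.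
- exact: D_direct.
- by rewrite D_swap23 D_direct // (cc_anti hchain) // opprK.
- by rewrite h D_self23 (cc_diag hchar hchain).
Qed.

Lemma E2 k i m : (k < n)%N -> (i < k)%N -> (m < k)%N -> Dcoef d i k m = - cc d k i m.
Proof. by move=> *; rewrite D_swap12 E1. Qed.

Lemma E3 k i j : (k < n)%N -> (i < k)%N -> (j < k)%N -> Dcoef d i j k = cc d k i j.
Proof. by move=> *; rewrite D_swap23 E2 // opprK. Qed.

End Dc.
Section Br.
Variables (K : fieldType) (n : nat) (d : nat -> 'M[K]_(2, n) -> 'M[K]_(2, n)).
Local Notation V := 'M[K]_(2, n).
Hypothesis hchar : [pchar K] =i pred0.
Hypothesis hchain : is_chain d.
Hypothesis h2sp : twoSP d.

Definition SS k (x y : V) m :=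
  \sum_(0 <= i < k) \sum_(0 <= j < k) coordb i x * coordb j y * Dcoef d i j m.

Lemma SS_proj k (x y : V) m : SS k (projA k x) (projA k y) m = SS k x y m.
Proof.
apply: eq_big_nat => i /andP [_ ik]; apply: eq_big_nat => j /andP [_ jk].
by rewrite !coordb_projA ik jk.
Qed.

Lemma sum_proj k (y : V) (F : nat -> K) :
  \sum_(0 <= j < k) coordb j (projA k y) * F j = \sum_(0 <= j < k) coordb j y * F j.
Proof. apply: eq_big_nat => j /andP [_ jk]; by rewrite coordb_projA jk. Qed.

Lemma SS_succ k (x y : V) m : SS k.+1 x y m = SS k x y m
  + \sum_(0 <= i < k) coordb i x * coordb k y * Dcoef d i k m
  + (\sum_(0 <= j < k) coordb k x * coordb j y * Dcoef d k j m
  + coordb k x * coordb k y * Dcoef d k k m).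
Proof.
rewrite /SS big_nat_recr //=.
rewrite (eq_bigr (fun i => \sum_(0 <= j < k) coordb i x * coordb j y * Dcoef d i j m
   + coordb i x * coordb k y * Dcoef d i k m)); last by move=> i _; rewrite big_nat_recr.
by rewrite big_split /= big_nat_recr.
Qed.

Lemma brA_closed k (x y : V) : (k <= n)%N ->
  brA d k x y = \sum_(0 <= m < k) SS k x y m *: bsvec m.
Proof.
elim: k x y => [|k IH] x y kn; first by rewrite big_geq.
have kn' : (k < n)%N by [].
rewrite /= IH ?(ltnW kn) // (dA hchain h2sp kn' (@inA_projA _ _ k x)) (dA hchain h2sp kn' (@inA_projA _ _ k y)).
apply: coord_eq => i ilt.
  by rewrite !(coordbD, coordbN, coordbZ, coordb_sum_bsvec, coordb_bsvec) !mulr0 subrr !addr0.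
rewrite !(coordsD, coordsN, coordsZ, coords_sum_bsvec, coords_bsvec) // ilt andbT.
case: (ltngtP i k) => h.
- rewrite mulr0 addr0 ltnS (ltnW h) SS_proj !sum_proj.
  rewrite SS_succ D_self12 mulr0 addr0.
  have e1 : \sum_(0 <= i0 < k) coordb i0 x * coordb k y * Dcoef d i0 k i =
     - (coordb k y * \sum_(0 <= i0 < k) coordb i0 x * cc d k i0 i).
    rewrite mulr_sumr -sumrN; apply: eq_big_nat => j /andP [_ jk].
    rewrite (E2 hchar hchain) //; ring.
  have e2 : \sum_(0 <= j < k) coordb k x * coordb j y * Dcoef d k j i =
     coordb k x * \sum_(0 <= j < k) coordb j y * cc d k j i.
    rewrite mulr_sumr; apply: eq_big_nat => j /andP [_ jk].
    rewrite (E1 hchar hchain) //; ring.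
  rewrite e1 e2; ring.
- rewrite mulr0 ltnS leqNgt h /=.
  by rewrite !mulr0 subrr !addr0.
- subst i; rewrite ltnSn /= !mulr0 subrr add0r mulr1.
  rewrite SS_succ D_self12 mulr0 addr0.
  have z1 : \sum_(0 <= i < k) coordb i x * coordb k y * Dcoef d i k k = 0.
    by apply: big1 => j _; rewrite D_self23 mulr0.
  have z2 : \sum_(0 <= j < k) coordb k x * coordb j y * Dcoef d k j k = 0.
    by apply: big1 => j _; rewrite D_self13 mulr0.
  rewrite z1 z2 !addr0.
  rewrite add0r formA_closed /SS exchange_big /=; apply: eq_big_nat => j /andP [_ jk].
  rewrite coordb_sum_bsvec mul0r add0r coords_sum_bsvec; last exact: ltn_trans jk kn'.
  rewrite jk.
  rewrite coordb_projA jk mulr_sumr.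
  apply: eq_big_nat => l /andP [_ lk].
  rewrite coordb_projA lk (E3 hchar hchain) //; ring.
Qed.

End Br.
Section Top.
Variables (K : fieldType) (n : nat) (d : nat -> 'M[K]_(2, n) -> 'M[K]_(2, n)).
Local Notation V := 'M[K]_(2, n).
Hypothesis hchar : [pchar K] =i pred0.
Hypothesis hchain : is_chain d.
Hypothesis h2sp : twoSP d.

Local Notation Br := (brA d n).

Lemma coordb_Br i (x y : V) : coordb i (Br x y) = 0.
Proof. by rewrite (brA_closed hchar hchain h2sp) // coordb_sum_bsvec. Qed.

Lemma coords_Br m (x y : V) : (m < n)%N -> coords m (Br x y) = SS d n x y m.
Proof. by move=> mn; rewrite (brA_closed hchar hchain h2sp) // coords_sum_bsvec // mn. Qed.

Lemma Br_ext (x y x' y' : V) :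
  (forall m, (m < n)%N -> SS d n x y m = SS d n x' y' m) -> Br x y = Br x' y'.
Proof.
move=> h; apply: coord_eq => i ilt; first by rewrite !coordb_Br.
by rewrite !coords_Br // h.
Qed.

Lemma Br_A2r (x w : V) : (forall j, coordb j w = 0) -> Br x w = 0.
Proof.
move=> hw; apply: coord_eq => i ilt; first by rewrite coordb_Br coordb0.
rewrite coords_Br // coords0; apply: big1 => a _; apply: big1 => b _.
by rewrite hw mulr0 mul0r.
Qed.

Lemma Br_A2l (x w : V) : (forall j, coordb j w = 0) -> Br w x = 0.
Proof.
move=> hw; apply: coord_eq => i ilt; first by rewrite coordb_Br coordb0.
rewrite coords_Br // coords0; apply: big1 => a _; apply: big1 => b _.
by rewrite hw !mul0r.
Qed.

Lemma SS_anti (x y : V) m : SS d n y x m = - SS d n x y m.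
Proof.
rewrite /SS exchange_big /= -sumrN; apply: eq_bigr => i _.
rewrite -sumrN; apply: eq_bigr => j _.
by rewrite D_swap12; ring.
Qed.

Lemma Br_anti (x y : V) : Br y x = - Br x y.
Proof.
apply: coord_eq => i ilt; first by rewrite coordbN !coordb_Br oppr0.
by rewrite coordsN !coords_Br // SS_anti.
Qed.

Lemma Br_alt (x : V) : Br x x = 0.
Proof.
apply: coord_eq => i ilt; first by rewrite coordb_Br coordb0.
by rewrite coords_Br // coords0; apply: eq_opp0 => //; apply: SS_anti.
Qed.

Lemma Br_linl c (x y z : V) : Br (c *: x + y) z = c *: Br x z + Br y z.
Proof.
apply: coord_eq => i ilt.
  by rewrite coordbD coordbZ !coordb_Br mulr0 addr0.
rewrite coordsD coordsZ !coords_Br // /SS mulr_sumr -big_split; apply: eq_bigr => a _.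
rewrite mulr_sumr -big_split; apply: eq_bigr => b _.
rewrite /= coordbD coordbZ; ring.
Qed.

Lemma Br_linr c (x y z : V) : Br x (c *: y + z) = c *: Br x y + Br x z.
Proof.
by rewrite Br_anti Br_linl (Br_anti x y) (Br_anti x z) opprD scalerN !opprK.
Qed.

Lemma Br_scale c (x z : V) : Br (c *: x) z = c *: Br x z.
Proof.
have := Br_linl c x 0 z; rewrite !addr0 => ->.
by rewrite (Br_A2l _ (fun j => coordb0 _ _ j)) addr0.
Qed.

Lemma formA_linl k c (x y z : V) : formA k (c *: x + y) z = c * formA k x z + formA k y z.
Proof.
rewrite !formA_closed mulr_sumr -big_split; apply: eq_bigr => i _.
rewrite /= coordbD coordbZ coordsD coordsZ; ring.
Qed.

Lemma formA0l k (z : V) : formA k 0 z = 0.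
Proof. rewrite formA_closed big1 // => i _; by rewrite coordb0 coords0 mul0r mulr0 addr0. Qed.

Lemma triple_swap (F : nat -> nat -> nat -> K) :
  \sum_(0 <= a < n) \sum_(0 <= b < n) \sum_(0 <= c < n) F a b c =
  \sum_(0 <= a < n) \sum_(0 <= b < n) \sum_(0 <= c < n) F c b a.
Proof.
rewrite [LHS](eq_bigr (fun a => \sum_(0 <= c < n) \sum_(0 <= b < n) F a b c)); last first.
  by move=> a _; rewrite exchange_big.
rewrite [LHS]exchange_big; apply: eq_bigr => c _.
by rewrite exchange_big.
Qed.

Lemma formA_inv (x y z : V) : formA n (Br x y) z + formA n y (Br x z) = 0.
Proof.
rewrite !formA_closed.
rewrite (eq_big_nat _ _ (F2 := fun m => coordb m z * SS d n x y m)); last first.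
  by move=> m /andP [_ mn]; rewrite coordb_Br coords_Br // mul0r add0r.
rewrite [X in _ + X = _](eq_big_nat _ _ (F2 := fun m => coordb m y * SS d n x z m)); last first.
  by move=> m /andP [_ mn]; rewrite coordb_Br coords_Br // mul0r addr0.
rewrite /SS.
have e : forall (w u v : V),
  \sum_(0 <= m < n) coordb m w * (\sum_(0 <= i < n) \sum_(0 <= j < n)
     coordb i u * coordb j v * Dcoef d i j m) =
  \sum_(0 <= m < n) \sum_(0 <= i < n) \sum_(0 <= j < n)
     coordb m w * coordb i u * coordb j v * Dcoef d i j m.
  move=> w u v; apply: eq_bigr => m _; rewrite mulr_sumr; apply: eq_bigr => i _.
  rewrite mulr_sumr; apply: eq_bigr => j _; ring.
rewrite !e (triple_swap (fun m i j => coordb m y * coordb i x * coordb j z * Dcoef d i j m)).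
rewrite -big_split big1 // => m _; rewrite -big_split big1 // => i _.
rewrite -big_split big1 // => j _.
rewrite /= D_swap23; ring.
Qed.

Lemma formA_nondeg (x : V) : (forall y, formA n x y = 0) -> x = 0.
Proof.
move=> h; apply: coord_eq => i ilt.
  by rewrite coordb0 -(h (bsvec i)) formA_bsvec_r // ilt.
by rewrite coords0 -(h (bvec i)) formA_bvec_r // ilt.
Qed.

Lemma quadratic : is_quadratic_Lie Br (formA n).
Proof.
split.
- split; [exact: Br_linl | exact: Br_linr | exact: Br_alt |].
  by move=> x y z; rewrite !(Br_A2r _ (fun j => coordb_Br j _ _)) !addr0.
- exact: formA_linl.
- exact: formA_sym.
- exact: formA_nondeg.
- exact: formA_inv.
Qed.

Lemma derived_coordb (w : V) : in_derived Br w -> forall j, coordb j w = 0.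
Proof.
case=> s -> j; rewrite coordb_sum big1 // => p _; exact: coordb_Br.
Qed.

Lemma what_nat i j : what d i j = \sum_(0 <= k < n) Dcoef d i j k *: (bsvec k : V).
Proof. by rewrite /what big_mkord. Qed.

Lemma coordb_what i j m : coordb m (what d i j) = 0.
Proof. by rewrite what_nat coordb_sum_bsvec. Qed.

Lemma coords_what i j m : (m < n)%N -> coords m (what d i j) = Dcoef d i j m.
Proof. by move=> mn; rewrite what_nat coords_sum_bsvec // mn. Qed.

Lemma Br_bb (i j : 'I_n) : Br (bvec i) (bvec j) = what d i j.
Proof.
apply: coord_eq => m mn; first by rewrite coordb_Br coordb_what.
rewrite coords_Br // coords_what // /SS.
rewrite (eq_big_nat _ _ (F2 := fun a => (a == i)%:R *
   \sum_(0 <= b < n) (b == j)%:R * Dcoef d a b m)); last first.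
  move=> a /andP [_ an]; rewrite mulr_sumr; apply: eq_big_nat => b /andP [_ bn].
  rewrite !coordb_bvec an bn !andbT; ring.
by rewrite sum_delta' ltn_ord sum_delta' ltn_ord.
Qed.

Lemma Br_ord (p q : V) :
  Br p q = \sum_(i < n) \sum_(j < n) (coordb i p * coordb j q) *: what d i j.
Proof.
apply: coord_eq => m mn.
  rewrite coordb_Br coordb_sum big1 // => i _; rewrite coordb_sum big1 // => j _.
  by rewrite coordbZ coordb_what mulr0.
rewrite coords_Br // /SS big_mkord coords_sum; apply: eq_bigr => i _.
rewrite big_mkord coords_sum; apply: eq_bigr => j _.
by rewrite coordsZ coords_what.
Qed.

Lemma what_anti (i j : nat) : what d j i = - what d i j.
Proof.
rewrite /what -sumrN; apply: eq_bigr => k _; by rewrite D_swap12 scaleNr.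
Qed.

Lemma span0 : in_span_what d (0 : V).
Proof.
exists (fun _ _ => 0); symmetry; apply: big1 => i _; apply: big1 => j _.
by rewrite scale0r.
Qed.

Lemma spanD (x y : V) : in_span_what d x -> in_span_what d y -> in_span_what d (x + y).
Proof.
case=> c1 -> [c2 ->]; exists (fun i j => c1 i j + c2 j j * 0 + c2 i j).
rewrite -big_split; apply: eq_bigr => i _; rewrite -big_split; apply: eq_bigr => j _.
by rewrite mulr0 addr0 scalerDl.
Qed.

Lemma span_lt (i j : 'I_n) c : (j < i)%N -> in_span_what d (c *: what d i j).
Proof.
move=> ji; exists (fun a b => if (a == i) && (b == j) then c else 0).
rewrite (bigD1 i) //= (bigD1 j) //= !eqxx /=.
rewrite [X in _ + X + _]big1 ?addr0; last first.
  by move=> b /andP [_ hb]; rewrite (negbTE hb) scale0r.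
rewrite big1 ?addr0 //.
move=> a ha; apply: big1 => b _; by rewrite (negbTE ha) scale0r.
Qed.

Lemma span_single (i j : 'I_n) c : in_span_what d (c *: what d i j).
Proof.
case: (ltngtP i j) => h.
- by rewrite (what_anti j i) scalerN -scaleNr; apply: span_lt.
- exact: span_lt.
- have -> : what d i j = 0.
    by rewrite /what big1 // => k _; rewrite h D_self12 scale0r.
  by rewrite scaler0; exact: span0.
Qed.

Lemma span_sum I (r : seq I) (P : pred I) (F : I -> V) :
  (forall i, P i -> in_span_what d (F i)) -> in_span_what d (\sum_(i <- r | P i) F i).
Proof.
move=> h; elim/big_ind: _ => //; [exact: span0 | exact: spanD].
Qed.

Lemma derived0 : in_derived Br (0 : V).
Proof. by exists [::]; rewrite big_nil. Qed.

Lemma derivedD (x y : V) : in_derived Br x -> in_derived Br y -> in_derived Br (x + y).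
Proof. case=> s1 -> [s2 ->]; exists (s1 ++ s2); by rewrite big_cat. Qed.

Lemma derived_br (x y : V) : in_derived Br (Br x y).
Proof. by exists [:: (x, y)]; rewrite big_seq1. Qed.

Lemma derived_sum I (r : seq I) (P : pred I) (F : I -> V) :
  (forall i, P i -> in_derived Br (F i)) -> in_derived Br (\sum_(i <- r | P i) F i).
Proof.
move=> h; elim/big_ind: _ => //; [exact: derived0 | exact: derivedD].
Qed.

Lemma span_derived (w : V) : in_span_what d w -> in_derived Br w.
Proof.
case=> c ->; apply: derived_sum => i _; apply: derived_sum => j _.
rewrite -Br_bb -Br_scale; exact: derived_br.
Qed.

Lemma derived_span (w : V) : in_derived Br w -> in_span_what d w.
Proof.
case=> s ->; apply: span_sum => p _; rewrite Br_ord.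
apply: span_sum => i _; apply: span_sum => j _; exact: span_single.
Qed.

Lemma span_coordb (w : V) : in_span_what d w -> forall j, coordb j w = 0.
Proof.
move=> /span_derived; exact: derived_coordb.
Qed.

Lemma center_orth (x w : V) : in_center Br x -> in_span_what d w -> formA n w x = 0.
Proof.
move=> hx [c ->].
have hP : forall u : V, in_derived Br u -> formA n u x = 0.
  move=> u [s ->]; elim/big_ind: _.
  - exact: formA0l.
  - move=> a b ha hb; have := formA_linl n 1 a b x; by rewrite scale1r ha hb mulr0 addr0.
  move=> [p q] _ /=.
  have := formA_inv p q x; rewrite (Br_anti x p) hx oppr0.
  by rewrite [formA n q 0]formA_sym formA0l addr0.
apply: hP; apply: span_derived; by exists c.
Qed.

End Top.
From Stdlib Require Import Classical_Prop.

Unset Implicit Arguments.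

Theorem lemma2p13 (K : fieldType) (n : nat) (d : nat -> 'M[K]_(2, n) -> 'M[K]_(2, n)) :
  [pchar K] =i pred0 ->
  is_chain d -> NNP d -> twoSP d ->
  (3 <= n)%N /\
  ([/\ is_quadratic_Lie (brA d n) (formA n),
       two_step_nilpotent (brA d n),
       (forall x, inA2 n x -> in_center (brA d n) x),
       ((forall i j : 'I_n, brA d n (bvec i) (bvec j) = what d i j) /\
        (forall (i : 'I_n) y, brA d n (bsvec i) y = 0)) &
       (forall i j : 'I_n,
          [/\ formA (K := K) (n := n) n (bvec i) (bsvec j) = (i == j)%:R,
              formA (K := K) (n := n) n (bvec i) (bvec j) = 0 &
              formA (K := K) (n := n) n (bsvec i) (bsvec j) = 0])]
   /\
   (reduced (brA d n) <-> (forall x, inA2 n x <-> in_span_what d x))).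
Proof.
move=> hchar hchain hnnp h2sp.
have key : exists k m l, (k < n)%N /\ (m < k)%N /\ (l < k)%N /\ cc d k m l != 0.
  case: hnnp => k [kn [x [hx hdx]]].
  apply: NNPP => H; move/negP: hdx; apply; apply/eqP.
  rewrite (dA hchain h2sp kn hx) big_nat_cond big1 // => l /andP [/andP [_ lk] _].
  rewrite big_nat_cond big1 ?scale0r // => m /andP [/andP [_ mk] _].
  case: (eqVneq (cc d k m l) 0) => [-> | ne]; first by rewrite mulr0.
  by exfalso; apply: H; exists k, m, l.
case: key => k [m [l [kn [mk [lk hc]]]]].
have ml : m <> l by move=> e; move: hc; rewrite e (cc_diag hchar hchain) ?eqxx.
have n3 : (3 <= n)%N by lia.
have mn : (m < n)%N by lia.
have ln : (l < n)%N by lia.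
have A2bs : forall j, inA2 n (bsvec j : 'M[K]_(2, n)).
  move=> j; apply/inA2_coord; split; first by move=> i ni; rewrite coords_out.
  by move=> i; rewrite coordb_bsvec.
split => //; split; [split|].
- exact: (quadratic hchar hchain h2sp).
- split; first by move=> x w /(derived_coordb hchar hchain h2sp) hw; apply: (Br_A2r hchar hchain h2sp).
  exists (brA d n (bvec m) (bvec l)); split; first exact: derived_br.
  have := Br_bb hchar hchain h2sp (Ordinal mn) (Ordinal ln) => /= ->.
  apply/negP => /eqP e; move: hc.
  have := coords_what d m l kn; rewrite e coords0 (E3 hchar hchain) // => <-.
  by rewrite eqxx.
- by move=> x /inA2_coord [_ h] y; apply: (Br_A2l hchar hchain h2sp).
- split; first exact: (Br_bb hchar hchain h2sp).
  by move=> i y; apply: (Br_A2l hchar hchain h2sp) => j; exact: coordb_bsvec.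
- move=> i j; split.
  + by rewrite formA_bsvec_r // ltn_ord coordb_bvec ltn_ord andbT eq_sym val_eqE.
  + by rewrite formA_bvec_r // ltn_ord coords_bvec.
  + by rewrite formA_bsvec_r // ltn_ord coordb_bsvec.
split.
- move=> red x; split.
  + move=> /inA2_coord [_ h]; apply: (derived_span hchar hchain h2sp); apply: red.
    by move=> y; apply: (Br_A2l hchar hchain h2sp).
  + move=> hs; apply/inA2_coord; split; first by move=> i ni; rewrite coords_out.
    exact: (span_coordb hchar hchain h2sp).
- move=> eqv x hx; apply: (span_derived hchar hchain h2sp); apply/eqv.
  apply/inA2_coord; split; first by move=> i ni; rewrite coords_out.
  move=> j; case: (ltnP j n) => jn; last by rewrite coordb_out.
  have := center_orth hchar hchain h2sp hx ((eqv (bsvec j)).1 (A2bs j)).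
  by rewrite formA_sym formA_bsvec_r // jn.
Qed.
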